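(* Let $g(t)$, $t\in[0,T)$, be the Ricci flow solution on $S^1\times S^3$ of the form $g(t)=\phi^2dz^2+a^2\omega^1\otimes\omega^1+b^2\omega^2\otimes\omega^2+c^2\omega^3\otimes\omega^3$ starting from initial data with $0<a\le b\le c$, and suppose the flow becomes singular at a finite time $T$ with $\check a(T)=0$, where $\check a(t)=\min_s a(s,t)$. Then $T\ge \frac{\check a(0)^2}{4}$.
   Context: $S^3=SU(2)$ carries a global left-invariant frame $E_1,E_2,E_3$ with $[E_i,E_j]=-2\epsilon_{ijk}E_k$ and dual coframe $\omega^i$; $z\in S^1=[0,2\pi)$, $\phi,a,b,c$ positive smooth $2\pi$-periodic functions; $s$ is the arclength coordinate $ds=\phi\,dz$. The Ricci flow $\partial_tg=-2\mathrm{Ric}(g)$ preserves this form. *)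

(* Defs.v *)
From Stdlib Require Import Reals List.
From Coquelicot Require Import Coquelicot.
Open Scope R_scope.

(* Functions of (z, t): z the S^1 coordinate (2*PI-periodic), t time. *)

Fixpoint dp (l : list bool) (f : R -> R -> R) : R -> R -> R :=
  match l with
  | nil => f
  | true :: l' => fun z t => Derive (fun z' => dp l' f z' t) z
  | false :: l' => fun z t => Derive (fun t' => dp l' f z t') t
  end.

Definition smooth_before (T : R) (f : R -> R -> R) : Prop :=
  forall (l : list bool) (z t : R), t < T ->
    ex_derive (fun z' => dp l f z' t) z /\
    ex_derive (fun t' => dp l f z t') t /\
    continuous (fun p : R * R => dp l f (fst p) (snd p)) (z, t).

Definition periodic_z (f : R -> R -> R) : Prop :=
  forall z t, f (z + 2 * PI) t = f z t.

Definition d_s (phi f : R -> R -> R) : R -> R -> R :=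
  fun z t => Derive (fun z' => f z' t) z / phi z t.

Definition d_ss (phi f : R -> R -> R) : R -> R -> R := d_s phi (d_s phi f).

Definition d_t (f : R -> R -> R) : R -> R -> R :=
  fun z t => Derive (fun t' => f z t') t.

(* The Ricci flow dg/dt = -2 Ric(g) for
   g = phi^2 dz^2 + a^2 w1^2 + b^2 w2^2 + c^2 w3^2 on S^1 x S^3,
   with [E_i,E_j] = -2 eps_ijk E_k, written as the equivalent PDE system
   (Ric(e1,e1) = -a_ss/a - (a_s/a)(b_s/b + c_s/c) + 2(a^4-(b^2-c^2)^2)/(a^2 b^2 c^2),
    Ric(d_s,d_s) = -(a_ss/a + b_ss/b + c_ss/c), all off-diagonal terms zero). *)
Definition ricci_flow_eqs (phi a b c : R -> R -> R) (z t : R) : Prop :=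
  let a_s := d_s phi a z t in
  let b_s := d_s phi b z t in
  let c_s := d_s phi c z t in
  let A := a z t in let B := b z t in let C := c z t in
  d_t a z t = d_ss phi a z t + a_s * (b_s / B + c_s / C)
              - 2 * (A ^ 4 - (B ^ 2 - C ^ 2) ^ 2) / (A * B ^ 2 * C ^ 2) /\
  d_t b z t = d_ss phi b z t + b_s * (a_s / A + c_s / C)
              - 2 * (B ^ 4 - (A ^ 2 - C ^ 2) ^ 2) / (A ^ 2 * B * C ^ 2) /\
  d_t c z t = d_ss phi c z t + c_s * (a_s / A + b_s / B)
              - 2 * (C ^ 4 - (A ^ 2 - B ^ 2) ^ 2) / (A ^ 2 * B ^ 2 * C) /\
  d_t phi z t = phi z t * (d_ss phi a z t / A + d_ss phi b z t / B
                           + d_ss phi c z t / C).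

(* (phi,a,b,c) is a smooth Ricci flow solution of the above form on [0,T):
   smooth (up to t = 0, via a smooth extension to t < 0), 2*PI-periodic in z,
   positive, and solving the flow for 0 <= t < T. *)
Definition is_RF_solution (T : R) (phi a b c : R -> R -> R) : Prop :=
  (forall f, In f (phi :: a :: b :: c :: nil) ->
     smooth_before T f /\ periodic_z f /\
     (forall z t, 0 <= t < T -> 0 < f z t)) /\
  (forall z t, 0 <= t < T -> ricci_flow_eqs phi a b c z t).

Definition is_spatial_min (f : R -> R -> R) (t m : R) : Prop :=
  (exists z, f z t = m) /\ (forall z, m <= f z t).

Definition min_tends_to_zero (f : R -> R -> R) (T : R) : Prop :=
  forall eps, 0 < eps -> exists delta, 0 < delta /\
    forall t, T - delta < t < T -> exists z, f z t < eps.

(* Main.v *)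
Require Import Defs.
From Stdlib Require Import Reals List Lra Classical.
From Coquelicot Require Import Coquelicot.
Open Scope R_scope.

Lemma cont2_ed (h : R -> R -> R) z t :
  continuous (fun p : R * R => h (fst p) (snd p)) (z, t) ->
  forall eps, 0 < eps -> exists d, 0 < d /\ forall z' s, Rabs (z' - z) < d -> Rabs (s - t) < d ->
  Rabs (h z' s - h z t) < eps.
Proof.
  intros Hc eps He.
  destruct (proj1 (filterlim_locally _ _) Hc (mkposreal eps He)) as [d Hd].
  exists d; split; [apply cond_pos|].
  intros z' s H1 H2.
  apply (Hd (z', s)). split; assumption.
Qed.

Lemma cont1_ed (g : R -> R) x : ex_derive g x ->
  forall eps, 0 < eps -> exists d, 0 < d /\ forall y, Rabs (y - x) < d -> Rabs (g y - g x) < eps.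
Proof.
  intros Hd eps He. apply ex_derive_continuous in Hd.
  destruct (proj1 (filterlim_locally _ _) Hd (mkposreal eps He)) as [d Hd'].
  exists d; split; [apply cond_pos|]. intros y Hy. apply (Hd' y). exact Hy.
Qed.

Lemma sign_neg (g : R -> R) x D : is_derive g x D -> D < 0 ->
  exists d, 0 < d /\ forall h, 0 < h < d -> g (x + h) < g x.
Proof.
  intros Hd HD. apply is_derive_Reals in Hd.
  destruct (Hd (- D / 2)) as [d Hd']; [lra|].
  exists d; split; [apply cond_pos|]. intros h [h0 hd].
  assert (Hh : h <> 0) by lra.
  assert (Ha : Rabs h < d) by (rewrite Rabs_pos_eq; lra).
  specialize (Hd' h Hh Ha).
  set (q := (g (x + h) - g x) / h) in Hd'.
  assert (Eq : g (x+h) - g x = q * h) by (unfold q; field; auto).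
  apply Rabs_def2 in Hd'. nra.
Qed.

Lemma sign_pos (g : R -> R) x D : is_derive g x D -> 0 < D ->
  exists d, 0 < d /\ forall h, 0 < h < d -> g (x - h) < g x.
Proof.
  intros Hd HD. apply is_derive_Reals in Hd.
  destruct (Hd (D / 2)) as [d Hd']; [lra|].
  exists d; split; [apply cond_pos|]. intros h [h0 hd].
  assert (Hh : - h <> 0) by lra.
  assert (Ha : Rabs (- h) < d) by (rewrite Rabs_Ropp, Rabs_pos_eq; lra).
  specialize (Hd' (- h) Hh Ha).
  set (q := (g (x + - h) - g x) / - h) in Hd'.
  assert (Eq : g (x + - h) - g x = q * - h) by (unfold q; field; lra).
  replace (x - h) with (x + - h) by ring.
  apply Rabs_def2 in Hd'. nra.
Qed.

Lemma min1 (g : R -> R) x : (forall y, g x <= g y) -> ex_derive g x -> Derive g x = 0.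
Proof.
  intros Hm Hd. pose proof (Derive_correct _ _ Hd) as Hc.
  destruct (Rtotal_order (Derive g x) 0) as [H|[H|H]]; auto; exfalso.
  - destruct (sign_neg _ _ _ Hc H) as [d [Hd0 Hd']].
    specialize (Hd' (d/2) ltac:(lra)). specialize (Hm (x + d/2)). lra.
  - destruct (sign_pos _ _ _ Hc H) as [d [Hd0 Hd']].
    specialize (Hd' (d/2) ltac:(lra)). specialize (Hm (x - d/2)). lra.
Qed.

Lemma min2 (g : R -> R) x : (forall y, ex_derive g y) -> (forall y, g x <= g y) ->
  ex_derive (Derive g) x -> 0 <= Derive (Derive g) x.
Proof.
  intros Hall Hm Hex.
  destruct (Rle_or_lt 0 (Derive (Derive g) x)) as [H|H]; auto; exfalso.
  assert (H0 : Derive g x = 0) by (apply min1; auto).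
  destruct (sign_neg (Derive g) x _ (Derive_correct _ _ Hex) H) as [d [Hd Hs]].
  pose (pr := fun y => ex_derive_Reals_0 g y (Hall y)).
  destruct (MVT_cor1 g x (x + d/2) pr) as [c [Hc1 Hc2]]; [lra|].
  rewrite Derive_Reals in Hc1.
  specialize (Hs (c - x)). replace (x + (c - x)) with c in Hs by ring. rewrite H0 in Hs.
  assert (Derive g c < 0) by (apply Hs; lra).
  specialize (Hm (x + d/2)). nra.
Qed.

Lemma at_min_deriv (T : R) (phi f : R -> R -> R) z0 t :
  smooth_before T f -> smooth_before T phi -> t < T -> 0 < phi z0 t ->
  (forall z, f z0 t <= f z t) ->
  d_s phi f z0 t = 0 /\ 0 <= d_ss phi f z0 t.
Proof.
  intros Hf Hp Ht Hph Hm.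
  assert (Hex : forall y, ex_derive (fun z => f z t) y) by (intro y; exact (proj1 (Hf nil y t Ht))).
  assert (Hex2 : ex_derive (Derive (fun z => f z t)) z0) by exact (proj1 (Hf (true::nil) z0 t Ht)).
  assert (Hphi : ex_derive (fun z => phi z t) z0) by exact (proj1 (Hp nil z0 t Ht)).
  assert (H0 : Derive (fun z => f z t) z0 = 0) by (apply min1; auto).
  assert (H2 := min2 (fun z => f z t) z0 Hex Hm Hex2).
  split.
  - unfold d_s. rewrite H0. unfold Rdiv; ring.
  - unfold d_ss, d_s.
    rewrite (Derive_div (fun y => Derive (fun z => f z t) y) (fun y => phi y t)); auto; [|lra].
    rewrite H0.
    set (D2 := Derive (fun y => Derive (fun z => f z t) y) z0) in *.
    replace ((D2 * phi z0 t - 0 * Derive (fun y => phi y t) z0) / phi z0 t ^ 2 / phi z0 t)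
      with (D2 / (phi z0 t) ^ 2) by (field; lra).
    unfold Rdiv. apply Rmult_le_pos; auto.
    apply Rlt_le, Rinv_0_lt_compat, pow_lt; lra.
Qed.

Lemma tube (H : R -> R -> R) tau :
  (forall z, forall eps, 0 < eps -> exists d, 0 < d /\ forall z' s, Rabs (z' - z) < d ->
     Rabs (s - tau) < d -> Rabs (H z' s - H z tau) < eps) ->
  (forall z, 0 <= z <= 2*PI -> 0 < H z tau) ->
  exists d, 0 < d /\ forall z s, 0 <= z <= 2*PI -> Rabs (s - tau) < d -> 0 < H z s.
Proof.
  intros Hc Hp.
  set (P := fun x => exists d, 0 < d /\ forall z s, 0 <= z <= x -> Rabs (s - tau) < d -> 0 < H z s).
  assert (Loc : forall z, 0 <= z <= 2*PI -> exists r, 0 < r /\ forall z' s,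
     Rabs (z'-z) < r -> Rabs (s - tau) < r -> 0 < H z' s).
  { intros z Hz. pose proof (Hp z Hz) as Hpz.
    destruct (Hc z (H z tau / 2)) as [r [Hr Hr']]; [lra|].
    exists r; split; auto. intros z' s H1 H2. specialize (Hr' z' s H1 H2).
    apply Rabs_def2 in Hr'. lra. }
  set (E := fun x => 0 <= x <= 2*PI /\ P x).
  assert (PI_pos := PI_RGT_0).
  assert (E0 : E 0).
  { split; [lra|]. destruct (Loc 0) as [r [Hr Hr']]; [lra|]. exists r; split; auto.
    intros z s Hz Hs. apply Hr'; auto. replace (z - 0) with 0 by lra. rewrite Rabs_R0; lra. }
  assert (Hb : bound E). { exists (2*PI). intros x [Hx _]; lra. }
  destruct (completeness E Hb (ex_intro _ 0 E0)) as [xs [Hub Hlub]].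
  assert (Hxs0 : 0 <= xs) by (apply Hub; auto).
  assert (Hxs1 : xs <= 2*PI). { apply Hlub. intros x [Hx _]; lra. }
  destruct (Loc xs) as [r [Hr Hr']]; [lra|].
  assert (Hex : exists x, E x /\ xs - r < x).
  { apply NNPP; intro Hn. assert (xs <= xs - r); [|lra]. apply Hlub. intros x Ex.
    apply Rnot_lt_le. intro Hlt. apply Hn. exists x; auto. }
  destruct Hex as [x [[Hx [d1 [Hd1 Hd1']]] Hxr]].
  set (y := Rmin (xs + r/2) (2*PI)).
  assert (Hy : y <= xs + r/2) by apply Rmin_l.
  assert (Py : P y).
  { exists (Rmin d1 r). split. apply Rmin_pos; lra. intros z s Hz Hs.
    destruct (Rle_or_lt z x).
    - apply Hd1'; [lra| eapply Rlt_le_trans; [exact Hs| apply Rmin_l]].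
    - apply Hr'. apply Rabs_def1; lra. eapply Rlt_le_trans; [exact Hs|apply Rmin_r]. }
  destruct (Rle_or_lt (2*PI) (xs + r/2)) as [Hle|Hlt].
  - destruct Py as [d [Hd Hd']]; exists d; split; auto; intros z s Hz Hs; apply Hd'; auto.
    unfold y; rewrite Rmin_right; lra.
  - assert (Ey : E y) by (split; [unfold y; rewrite Rmin_left; lra | exact Py]).
    specialize (Hub y Ey); unfold y in Hub; rewrite Rmin_left in Hub; lra.
Qed.

Lemma per_int (f : R -> R -> R) t : periodic_z f -> forall k : Z, forall x, f (x + 2*PI*IZR k) t = f x t.
Proof.
  intros Hp k. induction k using Z.peano_ind; intros x.
  - f_equal. simpl. ring.
  - rewrite succ_IZR. replace (x + 2*PI*(IZR k + 1)) with ((x + 2*PI*IZR k) + 2*PI) by ring.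
    rewrite Hp. apply IHk.
  - replace (IZR (Z.pred k)) with (IZR k - 1) by (rewrite <- Z.sub_1_r, minus_IZR; reflexivity).
    rewrite <- Hp. replace (x + 2*PI*(IZR k - 1) + 2*PI) with (x + 2*PI*IZR k) by ring. apply IHk.
Qed.

Lemma per_red (f : R -> R -> R) t : periodic_z f -> forall z, exists z', 0 <= z' <= 2*PI /\ f z t = f z' t.
Proof.
  intros Hp z. assert (PI_pos := PI_RGT_0).
  destruct (base_Int_part (z/(2*PI))) as [H1 H2].
  set (k := Int_part (z / (2*PI))) in *.
  exists (z - 2*PI*IZR k). split.
  - assert (Hz: z = (z/(2*PI))*(2*PI)) by (field; lra).
    set (q := z/(2*PI)) in *. nra.
  - rewrite <- (per_int f t Hp k (z - 2*PI*IZR k)). f_equal; ring.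
Qed.

Lemma alg (X Y Z W : R) : 0 < X -> X <= Y -> X <= Z -> X * (2 * (X^4 - W^2) / (X * Y^2 * Z^2)) <= 2.
Proof.
  intros. assert (0 < Y) by lra. assert (0 < Z) by lra.
  replace (X * (2 * (X^4 - W^2) / (X * Y^2 * Z^2))) with (2 * (X^4 - W^2) / (Y^2 * Z^2))
    by (field; repeat split; lra).
  assert (0 < Y^2*Z^2) by (apply Rmult_lt_0_compat; apply pow_lt; lra).
  apply Rmult_le_reg_r with (Y^2*Z^2); auto. unfold Rdiv.
  rewrite Rmult_assoc, Rinv_l, Rmult_1_r; [|lra].
  assert (X^2 <= Y^2) by (apply pow_incr; lra).
  assert (X^2 <= Z^2) by (apply pow_incr; lra).
  assert (X^4 <= Y^2*Z^2).
  { replace (X^4) with (X^2*X^2) by ring. apply Rmult_le_compat; auto; apply pow2_ge_0. }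
  assert (0 <= W^2) by apply pow2_ge_0. lra.
Qed.

Lemma at_min_contra (T : R) (phi f : R -> R -> R) (M eps tau z0 K Q : R) :
  smooth_before T f -> smooth_before T phi -> 0 < tau < T -> 0 < phi z0 tau -> 0 < f z0 tau -> 0 < eps ->
  (forall z, f z0 tau <= f z tau) ->
  (forall s, 0 <= s < tau -> 0 < f z0 s * f z0 s - (M - eps - 4*(1+eps)*s)) ->
  f z0 tau * f z0 tau - (M - eps - 4*(1+eps)*tau) = 0 ->
  d_t f z0 tau = d_ss phi f z0 tau + d_s phi f z0 tau * K - Q ->
  f z0 tau * Q <= 2 -> False.
Proof.
  intros Hf Hp Ht Hph Hfp He Hmin Hbef Hzero Heq HQ.
  destruct (at_min_deriv T phi f z0 tau Hf Hp (proj2 Ht) Hph Hmin) as [Hs Hss].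
  rewrite Hs in Heq.
  set (D := d_t f z0 tau) in *.
  assert (HD : is_derive (fun s => f z0 s) tau D).
  { unfold D, d_t. apply Derive_correct. exact (proj1 (proj2 (Hf nil z0 tau (proj2 Ht)))). }
  assert (H3 : is_derive (fun s : R => M - eps - 4*(1+eps)*s) tau (-(4*(1+eps)))).
  { auto_derive; auto. ring. }
  pose proof (is_derive_minus _ _ _ _ _ (is_derive_mult _ _ _ _ _ HD HD (fun _ _ => Rmult_comm _ _)) H3) as Hx.
  simpl in Hx. unfold minus, plus, opp, mult in Hx; simpl in Hx.
  destruct (sign_pos _ _ _ Hx) as [d [Hd Hd']].
  { assert (D >= -Q) by lra. assert (f z0 tau * D >= -2) by nra. lra. }
  set (h := Rmin d tau / 2).
  assert (0 < Rmin d tau) by (apply Rmin_pos; lra).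
  assert (Rmin d tau <= d) by apply Rmin_l.
  assert (Rmin d tau <= tau) by apply Rmin_r.
  specialize (Hd' h ltac:(unfold h; lra)).
  specialize (Hbef (tau - h) ltac:(unfold h; lra)).
  simpl in Hd'. lra.
Qed.

Theorem corollary4p2 (T : R) (phi a b c : R -> R -> R) :
  0 < T ->
  is_RF_solution T phi a b c ->
  (forall z, 0 < a z 0 <= b z 0 /\ b z 0 <= c z 0) ->
  min_tends_to_zero a T ->
  forall m, is_spatial_min a 0 m -> m ^ 2 / 4 <= T.
Proof.
  intros HT [Hsol Heq] Hinit Htend m [[zm Hzm] Hmin].
  destruct (Hsol phi) as [Sp [Pp Pop]]; [simpl; auto|].
  destruct (Hsol a) as [Sa [Pa Poa]]; [simpl; auto|].
  destruct (Hsol b) as [Sb [Pb Pob]]; [simpl; auto|].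
  destruct (Hsol c) as [Sc [Pc Poc]]; [simpl; auto 6|].
  assert (Hm : 0 < m). { rewrite <- Hzm. destruct (Hinit zm) as [[H1 _] _]. exact H1. }
  assert (Claim : forall eps, 0 < eps -> forall t, 0 <= t < T -> forall z,
             0 < a z t * a z t - (m*m - eps - 4*(1+eps)*t)).
  { intros eps He.
    set (F := fun (f : R -> R -> R) z s => f z s * f z s - (m*m - eps - 4*(1+eps)*s)).
    set (Good := fun s => forall z, 0 < F a z s /\ 0 < F b z s /\ 0 < F c z s).
    assert (G0 : Good 0).
    { intros z. destruct (Hinit z) as [[H1 H2] H3]. specialize (Hmin z). unfold F.
      repeat split; nra. }
    assert (Main : forall t, 0 <= t < T -> Good t).
    { apply NNPP. intro Hn. apply not_all_ex_not in Hn. destruct Hn as [t1 Hn].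
      apply imply_to_and in Hn. destruct Hn as [Ht1 Hng].
      set (E := fun s => 0 <= s /\ s < T /\ forall u, 0 <= u <= s -> Good u).
      assert (E0 : E 0).
      { split; [lra|split; [lra|]]. intros u Hu. replace u with 0 by lra. exact G0. }
      assert (Hb : bound E).
      { exists t1. intros s [Hs0 [HsT Hs]]. apply Rnot_lt_le; intro Hlt. apply Hng. apply Hs; lra. }
      destruct (completeness E Hb (ex_intro _ 0 E0)) as [tau [Hub Hlub]].
      assert (Htau0 : 0 <= tau) by (apply Hub; exact E0).
      assert (Htau1 : tau <= t1).
      { apply Hlub. intros s [Hs0 [HsT Hs]]. apply Rnot_lt_le; intro Hlt. apply Hng. apply Hs; lra. }
      assert (Before : forall u, 0 <= u < tau -> Good u).
      { intros u Hu. apply NNPP; intro Hnu. assert (tau <= u); [|lra]. apply Hlub.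
        intros s [Hs0 [HsT Hs]]. apply Rnot_lt_le; intro Hlt. apply Hnu. apply Hs; lra. }
      assert (HtT : tau < T) by lra.
      destruct (classic (Good tau)) as [Gt | NGt].
      - assert (Tube : forall f, smooth_before T f -> periodic_z f -> (forall z, 0 < F f z tau) ->
                 exists d, 0 < d /\ forall z s, Rabs (s - tau) < d -> 0 < F f z s).
        { intros f Sf Pf Hpos.
          destruct (tube (F f) tau) as [d [Hd Hd']].
          - intros z. apply cont2_ed.
            destruct (Sf nil z tau HtT) as [_ [_ Hc]]. simpl in Hc.
            unfold F.
            apply (continuous_minus (fun p : R*R => f (fst p) (snd p) * f (fst p) (snd p))
                     (fun p : R*R => m*m - eps - 4*(1+eps)*snd p)).
            + apply (continuous_mult (fun p : R*R => f (fst p) (snd p)) (fun p => f (fst p) (snd p)));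
                exact Hc.
            + apply (continuous_minus (fun _ : R*R => m*m - eps) (fun p : R*R => 4*(1+eps)*snd p)).
              * apply continuous_const.
              * apply (continuous_mult (fun _ : R*R => 4*(1+eps)) snd).
                apply continuous_const. apply continuous_snd.
          - intros z _. apply Hpos.
          - exists d; split; auto. intros z s Hs. destruct (per_red f s Pf z) as [z' [Hz' Heqz]].
            unfold F. rewrite Heqz. apply (Hd' z' s Hz' Hs). }
        destruct (Tube a Sa Pa (fun z => proj1 (Gt z))) as [da [Hda Hda']].
        destruct (Tube b Sb Pb (fun z => proj1 (proj2 (Gt z)))) as [db [Hdb Hdb']].
        destruct (Tube c Sc Pc (fun z => proj2 (proj2 (Gt z)))) as [dc [Hdc Hdc']].
        set (d := Rmin (Rmin da db) (Rmin dc (T - tau))).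
        assert (Hd : 0 < d) by (unfold d; repeat apply Rmin_pos; lra).
        assert (d1 : d <= da) by (unfold d; eapply Rle_trans; [apply Rmin_l|apply Rmin_l]).
        assert (d2 : d <= db) by (unfold d; eapply Rle_trans; [apply Rmin_l|apply Rmin_r]).
        assert (d3 : d <= dc) by (unfold d; eapply Rle_trans; [apply Rmin_r|apply Rmin_l]).
        assert (d4 : d <= T - tau) by (unfold d; eapply Rle_trans; [apply Rmin_r|apply Rmin_r]).
        assert (Ed : E (tau + d/2)).
        { split; [lra|split; [lra|]].
          intros u Hu. destruct (Rlt_or_le u tau) as [Hl|Hl]. apply Before; lra.
          assert (Rabs (u - tau) < d) by (rewrite Rabs_pos_eq; lra).
          intros z. split; [|split]; [apply Hda'|apply Hdb'|apply Hdc']; lra. }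
        specialize (Hub _ Ed). lra.
      - assert (Htau : 0 < tau).
        { destruct (Rle_lt_or_eq_dec 0 tau Htau0) as [H|H]; auto. subst tau. contradiction. }
        assert (Lim : forall f z, smooth_before T f -> (forall u, 0 <= u < tau -> 0 < F f z u) ->
                   0 <= F f z tau).
        { intros f z Sf Hu. apply Rnot_lt_le; intro Hlt.
          assert (Hex : ex_derive (fun s => F f z s) tau).
          { unfold F. destruct (Sf nil z tau HtT) as [_ [Hd _]]. simpl in Hd. auto_derive.
            repeat split; exact Hd. }
          destruct (cont1_ed _ _ Hex (- F f z tau / 2)) as [d [Hd Hd']]; [lra|].
          assert (0 < Rmin d tau) by (apply Rmin_pos; lra).
          assert (Rmin d tau <= d) by apply Rmin_l.
          assert (Rmin d tau <= tau) by apply Rmin_r.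
          specialize (Hd' (tau - Rmin d tau / 2)). specialize (Hu (tau - Rmin d tau / 2)).
          assert (Rabs (tau - Rmin d tau / 2 - tau) < d) by (rewrite Rabs_left; lra).
          specialize (Hd' H2). specialize (Hu ltac:(lra)).
          apply Rabs_def2 in Hd'. lra. }
        assert (Ha0 : forall z, 0 <= F a z tau)
          by (intros z; apply Lim; auto; intros u Hu; apply (Before u Hu z)).
        assert (Hb0 : forall z, 0 <= F b z tau)
          by (intros z; apply Lim; auto; intros u Hu; apply (Before u Hu z)).
        assert (Hc0 : forall z, 0 <= F c z tau)
          by (intros z; apply Lim; auto; intros u Hu; apply (Before u Hu z)).
        apply NGt. intros z.
        assert (Pos : forall z, 0 < phi z tau /\ 0 < a z tau /\ 0 < b z tau /\ 0 < c z tau).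
        { intros z'. repeat split; [apply Pop|apply Poa|apply Pob|apply Poc]; lra. }
        destruct (Pos z) as [Pz [Az [Bz Cz]]].
        destruct (Heq z tau (conj Htau0 HtT)) as [Ea [Eb [Ec _]]].
        pose proof (Ha0 z) as Az0. pose proof (Hb0 z) as Bz0. pose proof (Hc0 z) as Cz0.
        unfold F in Az0, Bz0, Cz0.
        split; [|split]; apply Rnot_le_lt; intro Hle; unfold F in Hle.
        + apply (at_min_contra T phi a (m*m) eps tau z
                   (d_s phi b z tau / b z tau + d_s phi c z tau / c z tau)
                   (2 * (a z tau ^ 4 - (b z tau ^ 2 - c z tau ^ 2) ^ 2) / (a z tau * b z tau ^ 2 * c z tau ^ 2)));
            auto; try lra.
          * intros z'. pose proof (Ha0 z') as H'. unfold F in H'. destruct (Pos z') as [_ [A' _]]. nra.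
          * intros s Hs; exact (proj1 (Before s Hs z)).
          * apply alg; nra.
        + apply (at_min_contra T phi b (m*m) eps tau z
                   (d_s phi a z tau / a z tau + d_s phi c z tau / c z tau)
                   (2 * (b z tau ^ 4 - (a z tau ^ 2 - c z tau ^ 2) ^ 2) / (a z tau ^ 2 * b z tau * c z tau ^ 2)));
            auto; try lra.
          * intros z'. pose proof (Hb0 z') as H'. unfold F in H'. destruct (Pos z') as [_ [_ [B' _]]]. nra.
          * intros s Hs; exact (proj1 (proj2 (Before s Hs z))).
          * replace (a z tau ^ 2 * b z tau * c z tau ^ 2) with (b z tau * a z tau ^ 2 * c z tau ^ 2) by ring.
            apply alg; nra.
        + apply (at_min_contra T phi c (m*m) eps tau z
                   (d_s phi a z tau / a z tau + d_s phi b z tau / b z tau)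
                   (2 * (c z tau ^ 4 - (a z tau ^ 2 - b z tau ^ 2) ^ 2) / (a z tau ^ 2 * b z tau ^ 2 * c z tau)));
            auto; try lra.
          * intros z'. pose proof (Hc0 z') as H'. unfold F in H'. destruct (Pos z') as [_ [_ [_ C']]]. nra.
          * intros s Hs; exact (proj2 (proj2 (Before s Hs z))).
          * replace (a z tau ^ 2 * b z tau ^ 2 * c z tau) with (c z tau * a z tau ^ 2 * b z tau ^ 2) by ring.
            apply alg; nra. }
    intros t Ht z. exact (proj1 (Main t Ht z)). }
  destruct (Rle_or_lt (m^2/4) T) as [H|H]; auto. exfalso.
  set (c0 := m*m - 4*T).
  assert (Hc0 : 0 < c0) by (unfold c0; replace (m^2) with (m*m) in H by ring; lra).
  set (eps := c0 / (2*(1+4*T))).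
  assert (He : 0 < eps) by (unfold eps; apply Rdiv_lt_0_compat; lra).
  assert (Heps : eps * (1 + 4*T) = c0/2) by (unfold eps; field; lra).
  set (e2 := Rmin 1 (c0/2)).
  assert (He2 : 0 < e2) by (apply Rmin_pos; lra).
  assert (He21 : e2 <= 1) by apply Rmin_l.
  assert (He22 : e2 <= c0/2) by apply Rmin_r.
  destruct (Htend e2 He2) as [d [Hd Hd']].
  set (t := Rmax (T - d/2) (T/2)).
  assert (Ht1 : T - d/2 <= t) by apply Rmax_l.
  assert (Ht2 : T/2 <= t) by apply Rmax_r.
  assert (Ht3 : t < T) by (apply Rmax_lub_lt; lra).
  destruct (Hd' t ltac:(lra)) as [z Hz].
  specialize (Claim eps He t ltac:(lra) z).
  assert (Hpos : 0 < a z t) by (apply Poa; lra).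
  assert (a z t * a z t < e2 * e2) by nra.
  assert (e2 * e2 <= e2) by nra.
  assert (4*(1+eps)*t <= 4*(1+eps)*T) by nra.
  unfold c0 in *. nra.
Qed.
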